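(* Let $(S,* )$ be a finite cycle set of class $d$ and let $k$ be a positive integer with $k<d$. Then the cycle set $(S^{[k]},\star)$ has class $d/\gcd(d,k)$. Moreover, $(S^{[d+1]},\star)$ coincides with $(S,* )$ as a cycle set, i.e. $\psi_{d+1}(s)(t)=s*t$ for all $s,t\in S$.
   Context: A cycle set is a set $S$ with a binary operation $*$ such that each $t\mapsto s*t$ is bijective and $(s*t)*(s*u)=(t*s)*(t*u)$ for all $s,t,u$. Write $S=\{s_1,\dots,s_n\}$, let $\psi(s)\in\mathfrak S_n$ satisfy $s_i*s_j=s_{\psi(s_i)(j)}$, $T(s)=s*s$, and $\psi_k(s)=\psi(T^{k-1}(s))\circ\cdots\circ\psi(T(s))\circ\psi(s)$. The class of a finite cycle set is the least integer $d\ge1$ with $\psi_d(s)=\mathrm{id}$ for all $s$. Let $M=\langle S\mid s(s*t)=t(t*s)\rangle^+$ be the structure monoid and $s^{[k]}=s\,T(s)\cdots T^{k-1}(s)\in M$. For $k\ge1$, $S^{[k]}=\{s^{[k]}:s\in S\}$ with $s^{[k]}\star t^{[k]}=(\psi_k(s)(t))^{[k]}$ is a cycle set (identified with $S$ via $s\mapsto s^{[k]}$). *)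

(* Defs.v *)
From mathcomp Require Import all_boot.
Set Implicit Arguments. Unset Strict Implicit. Unset Printing Implicit Defensive.

Definition is_cycle_set (S : finType) (op : S -> S -> S) : Prop :=
  (forall s, bijective (op s)) /\
  (forall s t u, op (op s t) (op s u) = op (op t s) (op t u)).

Definition Tsq (S : finType) (op : S -> S -> S) (s : S) : S := op s s.

(* psi_k(s) = psi(T^{k-1}(s)) o ... o psi(T(s)) o psi(s), where psi(s) is
   left multiplication by s; psi_0(s) = id. Recursively
   psi_{k+1}(s) = psi_k(T(s)) o psi(s). *)
Fixpoint psik (S : finType) (op : S -> S -> S) (k : nat) (s : S) : S -> S :=
  match k with
  | 0 => id
  | k'.+1 => psik op k' (Tsq op s) \o op s
  end.

(* The operation of S^[k], transported to S via s |-> s^[k]: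
   s^[k] * t^[k] = (psi_k(s)(t))^[k]. *)
Definition star_op (S : finType) (op : S -> S -> S) (k : nat) : S -> S -> S :=
  fun s t => psik op k s t.

Definition has_class (S : finType) (op : S -> S -> S) (d : nat) : Prop :=
  0 < d /\ (forall s, psik op d s =1 id) /\
  (forall d', 0 < d' -> d' < d -> ~ (forall s, psik op d' s =1 id)).

(* Main.v *)
Require Import Defs.
From mathcomp Require Import all_boot.

Section Aux.
Variables (S : finType) (op : S -> S -> S).

Lemma psikD a b s : psik op (a + b) s =1 psik op b (iter a (Tsq op) s) \o psik op a s.
Proof.
elim: a s => [|a IH] s x //=.
by rewrite IH /= -iterSr.
Qed.

Lemma psik_self a s : psik op a s s = iter a (Tsq op) s.
Proof.
elim: a s => [|a IH] s //=.
by rewrite -/(Tsq op s) IH -iterSr.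
Qed.

Lemma star_psik k m s : psik (star_op op k) m s =1 psik op (k * m) s.
Proof.
elim: m s => [|m IH] s x; first by rewrite muln0.
rewrite /= IH mulnS psikD /=.
congr (psik _ _ _ _).
by rewrite /Tsq /star_op psik_self.
Qed.

Definition good n := forall s, psik op n s =1 id.

Lemma good_iter n : good n -> forall s, iter n (Tsq op) s = s.
Proof. by move=> g s; rewrite -psik_self g. Qed.

Lemma goodD a b : good a -> (good (a + b) <-> good b).
Proof.
move=> ga; split=> H s x.
- have := H s x; rewrite psikD /= ga good_iter //.
- by rewrite psikD /= ga good_iter // H.
Qed.

Lemma good_dvd d : has_class op d -> forall n, good n <-> d %| n.
Proof.
move=> [d0 [gd md]] n.
elim: n {-2}n (leqnn n) => [|N IH] n le.
  by rewrite leqn0 in le; rewrite (eqP le) dvdn0; split=> // _ s x.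
case: (ltnP n d) => hn.
  case: n le hn => [|n] le hn; first by rewrite dvdn0; split=> // _ s x.
  split=> H; first by exfalso; exact: (md n.+1 isT hn H).
  by move: (dvdn_leq (ltn0Sn n) H); rewrite leqNgt hn.
rewrite -(subnKC hn) dvdn_addr //.
apply: iff_trans (@goodD d (n - d) gd) _; apply: IH.
rewrite leq_subLR; move: le; rewrite -addn1 addnC => le.
by apply: leq_trans le _; rewrite leq_add2r.
Qed.

End Aux.

Lemma dvd_key d k m : 0 < d -> (d %| k * m) = (d %/ gcdn d k %| m).
Proof.
move=> d0.
have g0 : 0 < gcdn d k by rewrite gcdn_gt0 d0.
have Ed : d = d %/ gcdn d k * gcdn d k by rewrite divnK // dvdn_gcdl.
have Ek : k = k %/ gcdn d k * gcdn d k by rewrite divnK // dvdn_gcdr.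
have cop : coprime (d %/ gcdn d k) (k %/ gcdn d k).
  by rewrite /coprime -(eqn_pmul2r g0) mul1n muln_gcdl -Ed -Ek.
set g := gcdn d k in g0 Ed Ek cop *.
set d' := d %/ g in Ed cop *; set k' := k %/ g in Ek cop *.
rewrite Ed Ek mulnAC dvdn_pmul2r // Gauss_dvdr //.
Qed.

Theorem mainTheorem10 (S : finType) (op : S -> S -> S) (d k : nat) :
  is_cycle_set op -> has_class op d -> 0 < k -> k < d ->
  has_class (star_op op k) (d %/ gcdn d k) /\
  (forall s t : S, star_op op d.+1 s t = op s t).
Proof.
move=> _ hc k0 kd.
have d0 : 0 < d by case: hc.
have gd := @good_dvd S op d hc.
have sg : forall m, (forall s, psik (star_op op k) m s =1 id) <-> d %/ gcdn d k %| m.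
  move=> m; rewrite -dvd_key //; apply: iff_trans (gd (k * m)); split=> H s x.
  - by rewrite -star_psik H.
  - by rewrite star_psik H.
split.
  split; first by rewrite divn_gt0 ?gcdn_gt0 ?d0 // dvdn_leq ?dvdn_gcdl.
  split; first by apply/sg.
  move=> m m0 lm /sg H.
  by move: (dvdn_leq m0 H); rewrite leqNgt lm.
move=> s t.
rewrite /star_op -addn1 psikD /=.
have [_ [gdd _]] := hc.
by rewrite gdd (@good_iter S op d gdd).
Qed.
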